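(* Let $R$ be a discrete valuation ring with uniformizer $\pi$, and let $T$ be an $R$-module such that $\pi^NT=0$ for some $N\geq1$. Let $\pi_T$ be the endomorphism of $T$ given by multiplication by $\pi$, and define $m_-(T)=\sum_{n\geq0}(\mathrm{Im}\,\pi_T^n\cap\mathrm{Ker}\,\pi_T^n)$ and $m_+(T)=\bigcap_{n\geq0}(\mathrm{Im}\,\pi_T^n+\mathrm{Ker}\,\pi_T^n)$. Then $\pi\cdot m_+(T)\subset m_-(T)\subset m_+(T)$, and there are $R$-module isomorphisms $m_+(T)\simeq T/m_-(T)$ and $m_-(T)\simeq T/m_+(T)$. *)

(* Defs.v *)
From HB Require Import structures.
From mathcomp Require Import all_boot all_order all_algebra.
Set Implicit Arguments. Unset Strict Implicit. Unset Printing Implicit Defensive.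
Import Order.TTheory GRing.Theory Num.Theory.
Local Open Scope ring_scope.

Definition is_DVR_with_uniformizer (R : idomainType) (pi : R) : Prop :=
  pi != 0 /\ pi \isn't a GRing.unit /\
  (forall a : R, a != 0 -> exists (u : R) (n : nat), u \is a GRing.unit /\ a = u * pi ^+ n).

Definition piT (R : idomainType) (T : lmodType R) (pi : R) (x : T) : T := pi *: x.
Definition piT_pow (R : idomainType) (T : lmodType R) (pi : R) (n : nat) : T -> T :=
  iter n (piT pi).

Definition ImP (R : idomainType) (T : lmodType R) (pi : R) (n : nat) (y : T) : Prop :=
  exists x : T, y = piT_pow pi n x.
Definition KerP (R : idomainType) (T : lmodType R) (pi : R) (n : nat) (y : T) : Prop :=
  piT_pow pi n y = 0.

Definition m_minus (R : idomainType) (T : lmodType R) (pi : R) (x : T) : Prop :=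
  exists (k : nat) (f : nat -> T),
    (forall i, (i < k)%N -> ImP pi i (f i) /\ KerP pi i (f i)) /\
    x = \sum_(i < k) f i.

Definition m_plus (R : idomainType) (T : lmodType R) (pi : R) (x : T) : Prop :=
  forall n : nat, exists a b : T, ImP pi n a /\ KerP pi n b /\ x = a + b.

Definition is_Rlinear (R : idomainType) (T : lmodType R) (f : T -> T) : Prop :=
  forall (c : R) (x y : T), f (c *: x + y) = c *: f x + f y.

(* A ~= T / B  (A, B submodules of T), expressed via the first isomorphism
   theorem: there is an R-linear map T -> T with image exactly A and kernel
   exactly B. *)
Definition iso_to_quotient (R : idomainType) (T : lmodType R) (A B : T -> Prop) : Prop :=
  exists f : T -> T, is_Rlinear f /\
    (forall y, A y <-> exists x, y = f x) /\
    (forall x, B x <-> f x = 0).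

(* Main.v *)
Require Import Defs.
From HB Require Import structures.
From mathcomp Require Import all_boot all_order all_algebra.
From mathcomp Require classical_sets.
From mathcomp Require Import zify ring.
From Stdlib Require Import Classical ClassicalEpsilon FunctionalExtensionality PropExtensionality.
Import Order.TTheory GRing.Theory Num.Theory.
Local Open Scope ring_scope.
Set Implicit Arguments. Unset Strict Implicit. Unset Printing Implicit Defensive.

Lemma myZorn (T : Type) (P : (T -> Prop) -> Prop) :
  (forall F : (T -> Prop) -> Prop, (forall X, F X -> P X) ->
     (forall X Y, F X -> F Y -> (forall t, X t -> Y t) \/ (forall t, Y t -> X t)) ->
     P (fun t => exists X, F X /\ X t)) ->
  exists A, P A /\ forall B, (forall t, A t -> B t) -> P B -> forall t, B t -> A t.
Proof.
move=> H.
have [|A [PA maxA]] := @classical_sets.Zorn_bigcup T P.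
  move=> F FP Ftot.
  have -> : classical_sets.bigcup F id = (fun t => exists X, F X /\ X t).
    apply: functional_extensionality_dep => t /=.
    apply: propositional_extensionality; split.
      by case=> X FX Xt; exists X.
    by case=> X [FX Xt]; exists X.
  apply: H => // X Y FX FY; exact: Ftot.
exists A; split => // B AB PB t Bt.
apply: NNPP => nAt; apply: (maxA B) => //; split => //.
by move=> BA; apply: nAt; apply: BA.
Qed.

Lemma ex_minP (P : nat -> Prop) n : P n -> exists m, P m /\ forall k, P k -> (m <= k)%N.
Proof.
elim/ltn_ind: n => n IH Pn.
case: (classic (exists k, (k < n)%N /\ P k)) => [[k [kn Pk]]|H].
  exact: IH k kn Pk.
exists n; split => // k Pk; rewrite leqNgt; apply/negP => kn; apply: H; exists k.
by split.
Qed.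

Lemma ex_maxP (P : nat -> Prop) n b : P n -> (forall k, P k -> (k <= b)%N) ->
  exists m, P m /\ forall k, P k -> (k <= m)%N.
Proof.
move=> Pn Pb.
have Pn' : P (b - (b - n))%N by rewrite subKn ?Pb.
have [j [Pj jmin]] := @ex_minP (fun j => P (b - j)%N) (b - n)%N Pn'.
exists (b - j)%N; split => // k Pk.
have := jmin (b - k)%N; rewrite subKn ?Pb // => /(_ Pk) h.
by rewrite leq_subRL ?(leq_trans h) ?leq_subr // addnC -leq_subRL ?Pb.
Qed.

Section Mod.
Variables (R : idomainType) (pi : R) (T : lmodType R) (N : nat).
Hypothesis hR : is_DVR_with_uniformizer pi.
Hypothesis hT : forall x : T, pi ^+ N *: x = 0.

Definition hgt n (y : T) := exists t, y = pi ^+ n *: t.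

Lemma piT_powE n (x : T) : piT_pow pi n x = pi ^+ n *: x.
Proof.
elim: n => [|n IH]; first by rewrite /piT_pow /= expr0 scale1r.
by rewrite /piT_pow iterS -/(piT_pow pi n x) IH /piT scalerA -exprS.
Qed.

Lemma hgt0 n : hgt n 0.
Proof. by exists 0; rewrite scaler0. Qed.

Lemma hgtD n x y : hgt n x -> hgt n y -> hgt n (x + y).
Proof. by move=> [a ->] [b ->]; exists (a + b); rewrite scalerDr. Qed.

Lemma hgtN n x : hgt n x -> hgt n (- x).
Proof. by move=> [a ->]; exists (- a); rewrite scalerN. Qed.

Lemma hgtB n x y : hgt n x -> hgt n y -> hgt n (x - y).
Proof. by move=> hx hy; apply: hgtD => //; apply: hgtN. Qed.

Lemma hgtZ n r x : hgt n x -> hgt n (r *: x).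
Proof. by move=> [a ->]; exists (r *: a); rewrite !scalerA mulrC. Qed.

Lemma hgt_sum n (s : seq T) (F : T -> T) :
  (forall e, e \in s -> hgt n (F e)) -> hgt n (\sum_(e <- s) F e).
Proof.
elim: s => [|a s IH] H; first by rewrite big_nil; apply: hgt0.
rewrite big_cons; apply: hgtD; first by apply: H; rewrite inE eqxx.
by apply: IH => e es; apply: H; rewrite inE es orbT.
Qed.

Lemma hgt_le m n x : (m <= n)%N -> hgt n x -> hgt m x.
Proof.
move=> mn [a ->]; exists (pi ^+ (n - m) *: a).
by rewrite scalerA -exprD subnKC.
Qed.

Lemma hgt_pi m n x : (n <= m)%N -> hgt n (pi ^+ m *: x).
Proof. by move=> nm; apply: (hgt_le nm); exists x. Qed.

Lemma piNx m (x : T) : (N <= m)%N -> pi ^+ m *: x = 0.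
Proof. by move=> Nm; rewrite -(subnKC Nm) exprD mulrC -scalerA hT scaler0. Qed.

Lemma hgt_big n x : (N <= n)%N -> hgt n x -> x = 0.
Proof.
by move=> Nn [a ->]; rewrite piNx.
Qed.

Lemma valP r : r != 0 -> exists u w, u \is a GRing.unit /\ r = u * pi ^+ w.
Proof. by case: hR => _ [_ H]; apply: H. Qed.

Lemma unitZ0 u (x : T) : u \is a GRing.unit -> u *: x = 0 -> x = 0.
Proof.
by move=> Uu ux; rewrite -[x]scale1r -(mulVr Uu) -scalerA ux scaler0.
Qed.

Lemma hgt_unit n u x : u \is a GRing.unit -> hgt n (u *: x) -> hgt n x.
Proof.
move=> Uu hx; have := hgtZ (u^-1) hx.
by rewrite scalerA mulVr // scale1r.
Qed.

Lemma exprZ m n (x : T) : pi ^+ m *: (pi ^+ n *: x) = pi ^+ (m + n) *: x.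
Proof. by rewrite scalerA exprD. Qed.

Lemma hgt_piZ m n (w : T) : hgt n w -> hgt (m + n) (pi ^+ m *: w).
Proof. by move=> [t ->]; exists t; rewrite exprZ. Qed.

End Mod.

Section Comb.
Variables (R : idomainType) (pi : R) (T : lmodType R) (N : nat).
Hypothesis hR : is_DVR_with_uniformizer pi.
Hypothesis hT : forall x : T, pi ^+ N *: x = 0.
Variable E : T -> Prop.

Definition inL (es : seq T) := forall e, e \in es -> E e.
Definition comb (es : seq T) (c : T -> R) := \sum_(e <- es) c e *: e.
Definition PI := forall es c n, uniq es -> inL es ->
  hgt pi n (comb es c) -> forall e, e \in es -> hgt pi n (c e *: e).
Definition HE := forall e, E e -> forall v,
  hgt pi v.+1 (pi ^+ v *: e) -> pi ^+ v *: e = 0.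
Definition span x := exists es c, [/\ uniq es, inL es & x = comb es c].

Lemma big_super (V : nmodType) (es us : seq T) (F : T -> V) :
  uniq es -> uniq us -> {subset es <= us} ->
  \sum_(e <- es) F e = \sum_(e <- us) (if e \in es then F e else 0).
Proof.
move=> ues uus sub; rewrite -big_mkcond -big_filter; apply: perm_big.
apply: uniq_perm => //; first exact: filter_uniq.
move=> x; rewrite mem_filter; case xes: (x \in es) => //=.
by rewrite (sub _ xes).
Qed.

Lemma comb_super es us c : uniq es -> uniq us -> {subset es <= us} ->
  comb es c = comb us (fun e => if e \in es then c e else 0).
Proof.
move=> ues uus sub; rewrite /comb (big_super _ ues uus sub).
by apply: eq_bigr => e _; case: (e \in es); rewrite ?scale0r.
Qed.

Lemma comb_lin us r c1 c2 :
  comb us (fun e => r * c1 e + c2 e) = r *: comb us c1 + comb us c2.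
Proof.
rewrite /comb scaler_sumr -big_split; apply: eq_bigr => e _.
by rewrite scalerDl scalerA.
Qed.

Lemma inL_undup es es' : inL es -> inL es' -> inL (undup (es ++ es')).
Proof.
move=> h1 h2 e; rewrite mem_undup mem_cat => /orP[]; [exact: h1|exact: h2].
Qed.

Lemma sub_undupl (es es' : seq T) : {subset es <= undup (es ++ es')}.
Proof. by move=> e ee; rewrite mem_undup mem_cat ee. Qed.
Lemma sub_undupr (es es' : seq T) : {subset es' <= undup (es ++ es')}.
Proof. by move=> e ee; rewrite mem_undup mem_cat ee orbT. Qed.

Lemma span_lin r x y : span x -> span y -> span (r *: x + y).
Proof.
move=> [es [c [ues ies ->]]] [es' [c' [ues' ies' ->]]].
set us := undup (es ++ es').
have uus : uniq us by apply: undup_uniq.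
exists us, (fun e => r * (if e \in es then c e else 0) + (if e \in es' then c' e else 0)).
split => //; first exact: inL_undup.
by rewrite comb_lin -!comb_super //; [apply: sub_undupr|apply: sub_undupl].
Qed.

Lemma span0 : span 0.
Proof. by exists [::], (fun _ => 0); split => //; rewrite /comb big_nil. Qed.

Lemma span_add x y : span x -> span y -> span (x + y).
Proof. by move=> hx hy; rewrite -[x]scale1r; apply: span_lin. Qed.

Lemma span_scale r x : span x -> span (r *: x).
Proof. by move=> hx; rewrite -[_ *: _]addr0; apply: span_lin => //; apply: span0. Qed.

Lemma span_opp x : span x -> span (- x).
Proof. by move=> hx; rewrite -scaleN1r; apply: span_scale. Qed.

Lemma span_sub x y : span x -> span y -> span (x - y).
Proof. by move=> hx hy; apply: span_add => //; apply: span_opp. Qed.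

Lemma span1 r e : E e -> span (r *: e).
Proof.
move=> Ee; exists [:: e], (fun _ => r); split => //.
  by move=> x; rewrite inE => /eqP ->.
by rewrite /comb big_seq1.
Qed.

Hypothesis hPI : PI.

Lemma comb_zero us d : uniq us -> inL us -> comb us d = 0 ->
  forall e, e \in us -> d e *: e = 0.
Proof.
move=> uus ius z e eu; apply: (hgt_big hT (leqnn N)).
by apply: hPI eu => //; rewrite z; apply: hgt0.
Qed.

Lemma rep_uniq es c es' c' : uniq es -> inL es -> uniq es' -> inL es' ->
  comb es c = comb es' c' -> forall e,
  (if e \in es then c e *: e else 0) = (if e \in es' then c' e *: e else 0).
Proof.
move=> ues ies ues' ies' eqc e.
set us := undup (es ++ es').
have uus : uniq us by apply: undup_uniq.
case eu: (e \in us); last first.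
  have : e \notin us by rewrite eu.
  by rewrite mem_undup mem_cat negb_or => /andP[/negbTE -> /negbTE ->].
have := comb_zero (d := fun e => (-1) * (if e \in es' then c' e else 0) + (if e \in es then c e else 0)) uus (inL_undup ies ies').
have h1 : comb es c = comb us (fun e => if e \in es then c e else 0).
  by apply: comb_super => //; apply: sub_undupl.
have h2 : comb es' c' = comb us (fun e => if e \in es' then c' e else 0).
  by apply: comb_super => //; apply: sub_undupr.
rewrite comb_lin -h1 -h2 eqc scaleN1r addNr => /(_ erefl e eu).
rewrite scalerDl mulN1r scaleNr.
case: (e \in es); case: (e \in es'); rewrite ?scale0r ?oppr0 ?addr0 ?add0r //.
- by move/eqP; rewrite addrC subr_eq0 => /eqP.
- by move=> h; rewrite -[RHS]opprK h oppr0.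
Qed.

Hypothesis hHE : HE.

Lemma he_div e c n : E e -> hgt pi n (c *: e) ->
  exists d, c *: e = d *: (pi ^+ n *: e).
Proof.
move=> Ee hc; case: (eqVneq c 0) => [->|cn0].
  by exists 0; rewrite !scale0r.
have [u [w [Uu def_c]]] := valP hR cn0.
rewrite def_c in hc *.
case: (leqP n w) => nw.
  exists (u * pi ^+ (w - n)); rewrite scalerA -mulrA -exprD subnK //.
have hw : hgt pi w.+1 (pi ^+ w *: e).
  apply: (hgt_le nw); apply: (hgt_unit Uu); by rewrite scalerA.
exists 0; by rewrite scale0r -scalerA (hHE Ee hw) scaler0.
Qed.

Lemma pur x m : span x -> hgt pi m x -> exists s, span s /\ x = pi ^+ m *: s.
Proof.
move=> [es [c [ues ies ->]]] hx.
have H e : exists d, e \in es -> c e *: e = d *: (pi ^+ m *: e).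
  case ee: (e \in es); last by exists 0.
  have [d hd] := he_div (ies e ee) (hPI ues ies hx ee).
  by exists d.
pose d e := proj1_sig (constructive_indefinite_description _ (H e)).
have hd e : e \in es -> c e *: e = d e *: (pi ^+ m *: e).
  exact: (proj2_sig (constructive_indefinite_description _ (H e))).
exists (comb es d); split; first by exists es, d.
rewrite /comb scaler_sumr big_seq [RHS]big_seq; apply: eq_bigr => e ee.
by rewrite hd // !scalerA mulrC.
Qed.

End Comb.

Section Ext.
Variables (R : idomainType) (pi : R) (T : lmodType R) (N : nat).
Hypothesis hR : is_DVR_with_uniformizer pi.
Hypothesis hT : forall x : T, pi ^+ N *: x = 0.
Variable A : T -> Prop.
Hypothesis hPI : PI pi A.
Hypothesis hHE : HE pi A.
Let S := span A.

Lemma extend x : ~ S x -> exists z, ~ A z /\ PI pi (fun t => A t \/ t = z)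
  /\ HE pi (fun t => A t \/ t = z).
Proof.
move=> nSx.
have SN : S (pi ^+ N *: x) by rewrite hT; apply: span0.
have [j [Sj jmin]] := @ex_minP (fun j => S (pi ^+ j *: x)) N SN.
have j0 : (0 < j)%N.
  by case: j Sj jmin => // ; rewrite expr0 scale1r => /nSx.
pose x1 := pi ^+ j.-1 *: x.
have nSx1 : ~ S x1 by move=> /jmin; rewrite -ltnS prednK // ltnn.
have Spx1 : S (pi *: x1) by rewrite /x1 scalerA -exprS prednK.
have h1 : hgt pi 1 (pi *: x1) by exists x1; rewrite expr1.
have [s' [Ss' es']] := pur hR hPI hHE Spx1 h1.
pose x2 := x1 - s'.
have px2 : pi *: x2 = 0 by rewrite /x2 scalerBr es' expr1 subrr.
have nSx2 : ~ S x2.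
  by move=> h; apply: nSx1; have := span_add h Ss'; rewrite /x2 subrK.
pose C y := S (y - x2) /\ pi *: y = 0.
pose Q h := exists y, C y /\ hgt pi h y.
have Q0 : Q 0%N.
  exists x2; split; first by split => //; rewrite subrr; apply: span0.
  by exists x2; rewrite expr0 scale1r.
have Qb : forall k, Q k -> (k <= N)%N.
  move=> k [y [[Sy _] hy]]; case: (leqP k N) => // /ltnW kN.
  exfalso; apply: nSx2; have y0 := hgt_big hT kN hy.
  by move: Sy; rewrite y0 sub0r => /span_opp; rewrite opprK.
have [h [Qh hmax]] := ex_maxP Q0 Qb.
have nQh1 : ~ Q h.+1 by move=> /hmax; rewrite ltnn.
case: Qh => y [[Sy py] [z yz]].
have zh v : (h < v)%N -> pi ^+ v *: z = 0.
  move=> hv; rewrite -(subnK hv) -exprZ exprS -scalerA -yz py scaler0.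
  by [].
have HEz v : hgt pi v.+1 (pi ^+ v *: z) -> pi ^+ v *: z = 0.
  move=> hv; case: (ltnP h v) => [/zh //| vh].
  exfalso; apply: nQh1; exists y; split => //.
  have := hgt_piZ (h - v) hv; rewrite exprZ addnC subnK // -yz.
  by rewrite addSn addnC subnK.
have nAz : ~ A z.
  move=> Az; apply: nSx2; have := span_sub (span1 (pi ^+ h) Az) Sy.
  by rewrite -yz opprB addrC subrK.
exists z; split => //; split; last first.
  by move=> e [Ae|->]; [exact: hHE|exact: HEz].
move=> es c n ues ies hc e ee.
case zes: (z \in es); last first.
  have iesA : inL A es.
    move=> e' e'es; case: (ies e' e'es) => // eq.
    by rewrite -eq e'es in zes.
  exact: hPI ues iesA hc e ee.
have ues' := rem_uniq z ues.
have iesA' : inL A (rem z es).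
  move=> e'; rewrite mem_rem_uniq // inE => /andP [ne e'es].
  by case: (ies _ e'es) => // eq; rewrite eq eqxx in ne.
have spl : comb es c = c z *: z + comb (rem z es) c.
  by rewrite /comb (big_rem z zes).
set s := comb (rem z es) c in spl.
have Ss : S s by exists (rem z es), c.
have key : hgt pi n (c z *: z).
  case: (eqVneq (c z) 0) => [->|cz0]; first by rewrite scale0r; apply: hgt0.
  have [u [w [Uu czE]]] := valP hR cz0.
  rewrite czE -scalerA.
  case: (ltnP h w) => [hw|wh]; first by rewrite zh // scaler0; apply: hgt0.
  case: (leqP n w) => [nw|wn]; first by apply: hgtZ; apply: hgt_pi.
  exfalso; apply: nQh1.
  have hc' : hgt pi n (s + u *: (pi ^+ w *: z)).
    by move: hc; rewrite spl czE -scalerA addrC.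
  case: hc' => t ht.
  pose s1 := (u^-1 * pi ^+ (h - w)) *: s.
  have Ss1 : S s1 by apply: span_scale.
  pose w0 := y + s1.
  have w0E : w0 = pi ^+ (h - w + n) *: (u^-1 *: t).
    have e1 : (u^-1 * pi ^+ (h - w)) *: (s + u *: (pi ^+ w *: z)) = s1 + y.
      rewrite scalerDr; congr (_ + _); rewrite yz !scalerA; congr (_ *: _).
      by rewrite -(mulrA _ _ u) (mulrC _ u) mulrA mulVr // mul1r -exprD subnK.
    rewrite /w0 addrC -e1 ht !scalerA.
    by rewrite -mulrA -exprD mulrC.
  have hw0 : hgt pi h.+1 w0.
    rewrite w0E; apply: hgt_pi.
    lia.
  have hpw0 : pi *: w0 = pi *: s1 by rewrite /w0 scalerDr py add0r.
  have hS2 : hgt pi h.+2 (pi *: s1).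
    rewrite -hpw0; case: hw0 => t' ->; exists t'.
    by rewrite scalerA -exprS.
  have [s3 [Ss3 s3E]] := pur hR hPI hHE (span_scale pi Ss1) hS2.
  exists (w0 - pi ^+ h.+1 *: s3); split; [split|].
  - rewrite /w0 (addrAC _ (- _) (- x2)) (addrAC y s1).
    apply: span_sub; [apply: span_add => //|apply: span_scale => //].
  - by rewrite scalerBr hpw0 (scalerA pi (pi ^+ h.+1)) -exprS -s3E subrr.
  - by apply: hgtB => //; exists s3.
have hs : hgt pi n s.
  have -> : s = comb es c - c z *: z by rewrite spl addrC addKr.
  exact: hgtB.
case: (eqVneq e z) => [-> //| ne].
by apply: (hPI ues' iesA' hs); rewrite mem_rem_uniq // inE ne ee.
Qed.

End Ext.

Lemma chain_fin (T : eqType) (F : (T -> Prop) -> Prop) (es : seq T) :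
  (forall X Y, F X -> F Y -> (forall t, X t -> Y t) \/ (forall t, Y t -> X t)) ->
  (forall e, e \in es -> exists X, F X /\ X e) -> es != [::] ->
  exists X, F X /\ forall e, e \in es -> X e.
Proof.
move=> tot; elim: es => [//|a es IH] H _.
have [Xa [FXa Xaa]] := H a (mem_head a es).
case: (eqVneq es [::]) => [->|nes].
  by exists Xa; split => // e; rewrite inE => /eqP ->.
have [Y [FY Yes]] : exists X, F X /\ forall e, e \in es -> X e.
  by apply: IH => // e ee; apply: H; rewrite inE ee orbT.
case: (tot _ _ FXa FY) => sub.
  exists Y; split => // e; rewrite inE => /orP[/eqP ->|]; [exact: sub|exact: Yes].
exists Xa; split => // e; rewrite inE => /orP[/eqP -> //|/Yes]; exact: sub.
Qed.

Lemma basis_exists (R : idomainType) (pi : R) (T : lmodType R) (N : nat)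
  (hR : is_DVR_with_uniformizer pi) (hT : forall x : T, pi ^+ N *: x = 0) :
  exists E : T -> Prop, [/\ PI pi E, HE pi E & forall x, span E x].
Proof.
have [|A [[PIA HEA] maxA]] := @myZorn T (fun E => PI pi E /\ HE pi E).
  move=> F FP Ftot; split.
    move=> es c n ues ies hc e ee.
    have [X [FX Xes]] : exists X, F X /\ inL X es.
      apply: chain_fin => //; last by case: es ee {ues ies hc}.
    exact: (FP X FX).1 es c n ues Xes hc e ee.
  move=> e [X [FX Xe]] v hv; exact: (FP X FX).2 e Xe v hv.
exists A; split => // x; apply: NNPP => nSx.
have [z [nAz [PIz HEz]]] := extend hR hT PIA HEA nSx.
apply: nAz; apply: (maxA (fun t => A t \/ t = z)) => //; [by move=> t At; left | by right].
Qed.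

Section MM.
Variables (R : idomainType) (pi : R) (T : lmodType R).

Lemma ImPE n (y : T) : ImP pi n y <-> hgt pi n y.
Proof. by rewrite /ImP /hgt; split => -[x hx]; exists x; rewrite hx piT_powE. Qed.

Lemma KerPE n (y : T) : KerP pi n y <-> pi ^+ n *: y = 0.
Proof. by rewrite /KerP piT_powE. Qed.

Lemma mm0 : m_minus pi (0 : T).
Proof. by exists 0%N, (fun _ => 0); split => //; rewrite big_ord0. Qed.

Lemma mmV n (y : T) : hgt pi n y -> pi ^+ n *: y = 0 -> m_minus pi y.
Proof.
move=> hy ky; exists n.+1, (fun i => if i == n then y else 0); split.
  move=> i _; case: eqP => [->|_]; split; rewrite ?ImPE ?KerPE //.
    exact: hgt0.
  by rewrite scaler0.
rewrite big_ord_recr /= eqxx big1 ?add0r // => i _.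
by rewrite (ltn_eqF (ltn_ord i)).
Qed.

Lemma mm_add (x y : T) : m_minus pi x -> m_minus pi y -> m_minus pi (x + y).
Proof.
move=> [k1 [f1 [H1 ->]]] [k2 [f2 [H2 ->]]].
exists (maxn k1 k2), (fun i => (if (i < k1)%N then f1 i else 0) + (if (i < k2)%N then f2 i else 0)).
split.
  move=> i _.
  have I1 : hgt pi i (if (i < k1)%N then f1 i else 0).
    by case: ifP => h; [apply/ImPE; exact: (H1 i h).1 | exact: hgt0].
  have I2 : hgt pi i (if (i < k2)%N then f2 i else 0).
    by case: ifP => h; [apply/ImPE; exact: (H2 i h).1 | exact: hgt0].
  have K1 : pi ^+ i *: (if (i < k1)%N then f1 i else 0) = 0.
    by case: ifP => h; [apply/KerPE; exact: (H1 i h).2 | exact: scaler0].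
  have K2 : pi ^+ i *: (if (i < k2)%N then f2 i else 0) = 0.
    by case: ifP => h; [apply/KerPE; exact: (H2 i h).2 | exact: scaler0].
  by split; [rewrite ImPE; exact: hgtD | rewrite KerPE scalerDr K1 K2 addr0].
rewrite big_split /=.
rewrite (big_ord_widen _ (fun i => f1 i) (leq_maxl k1 k2)).
rewrite (big_ord_widen _ (fun i => f2 i) (leq_maxr k1 k2)).
by rewrite -!big_mkcond.
Qed.

Lemma mm_sum (s : seq T) (F : T -> T) :
  (forall e, e \in s -> m_minus pi (F e)) -> m_minus pi (\sum_(e <- s) F e).
Proof.
move=> H; rewrite big_seq; apply: big_ind => //; [exact: mm0|exact: mm_add].
Qed.

Lemma mp_lin r (x y : T) : m_plus pi x -> m_plus pi y -> m_plus pi (r *: x + y).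
Proof.
move=> hx hy n; have [a1 [b1 [ha1 [hb1 ->]]]] := hx n.
have [a2 [b2 [ha2 [hb2 ->]]]] := hy n.
exists (r *: a1 + a2), (r *: b1 + b2); split; last split.
- by rewrite ImPE; apply: hgtD; [apply: hgtZ|]; rewrite -ImPE.
- rewrite KerPE scalerDr (KerPE _ b2).1 // addr0 scalerA mulrC -scalerA.
  by rewrite (KerPE _ b1).1 // scaler0.
- by rewrite scalerDr addrACA.
Qed.

Lemma mp0 : m_plus pi (0 : T).
Proof.
move=> n; exists 0, 0; rewrite ImPE KerPE scaler0 addr0; split => //.
exact: hgt0.
Qed.

Lemma mp_add (x y : T) : m_plus pi x -> m_plus pi y -> m_plus pi (x + y).
Proof. by move=> hx hy; rewrite -[x]scale1r; apply: mp_lin. Qed.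

Lemma mp_sum (s : seq T) (F : T -> T) :
  (forall e, e \in s -> m_plus pi (F e)) -> m_plus pi (\sum_(e <- s) F e).
Proof.
move=> H; rewrite big_seq; apply: big_ind => //; [exact: mp0|exact: mp_add].
Qed.

Lemma mm_mp (x : T) : m_minus pi x -> m_plus pi x.
Proof.
move=> [k [f [H ->]]]; rewrite -(big_map (fun i : 'I_k => f i) xpredT id).
apply: mp_sum => y /mapP [i _ ->]; have [hi ki] := H i (ltn_ord i).
move: hi ki; rewrite ImPE KerPE => hi ki m.
case: (leqP m i) => mi.
  exists (f i), 0; rewrite addr0 ImPE KerPE scaler0; split => //.
  exact: hgt_le hi.
exists 0, (f i); rewrite add0r ImPE KerPE; split; first exact: hgt0.
by rewrite -(subnK (ltnW mi)) -exprZ ki scaler0.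
Qed.

End MM.

Section Final.
Variables (R : idomainType) (pi : R) (T : lmodType R) (N : nat).
Hypothesis hR : is_DVR_with_uniformizer pi.
Hypothesis hT : forall x : T, pi ^+ N *: x = 0.
Variable E : T -> Prop.
Hypothesis hPI : PI pi E.
Hypothesis hHE : HE pi E.
Hypothesis hsp : forall x, span E x.

Lemma repEx x : exists p : seq T * (T -> R),
  [/\ uniq p.1, inL E p.1 & x = comb p.1 p.2].
Proof. by have [es [c [u i ->]]] := hsp x; exists (es, c). Qed.

Definition rep x := proj1_sig (constructive_indefinite_description _ (repEx x)).

Lemma rep_spec x : [/\ uniq (rep x).1, inL E (rep x).1 & x = comb (rep x).1 (rep x).2].
Proof. exact: (proj2_sig (constructive_indefinite_description _ (repEx x))). Qed.

Definition coef e x := if e \in (rep x).1 then (rep x).2 e else 0.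
Definition coord e x := coef e x *: e.

Lemma coordE x es c e : uniq es -> inL E es -> x = comb es c ->
  coord e x = (if e \in es then c e else 0) *: e.
Proof.
move=> ues ies xe; have [u i xr] := rep_spec x.
have := rep_uniq hT hPI u i ues ies (etrans (esym xr) xe) e.
rewrite /coord /coef.
by case: (e \in (rep x).1); case: (e \in es); rewrite ?scale0r.
Qed.

Lemma x_coords x : x = \sum_(e <- (rep x).1) coord e x.
Proof.
have [u i xr] := rep_spec x; rewrite {1}xr /comb big_seq [RHS]big_seq.
by apply: eq_bigr => e ee; rewrite /coord /coef ee.
Qed.

Lemma coord_lin e r x y : coord e (r *: x + y) = r *: coord e x + coord e y.
Proof.
have [u1 i1 ex] := rep_spec x; have [u2 i2 ey] := rep_spec y.
set es1 := (rep x).1 in u1 i1 ex *; set es2 := (rep y).1 in u2 i2 ey *.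
set us := undup (es1 ++ es2).
have uus : uniq us by apply: undup_uniq.
have h : r *: x + y = comb us (fun e => r * (if e \in es1 then (rep x).2 e else 0)
   + (if e \in es2 then (rep y).2 e else 0)).
  rewrite comb_lin -!comb_super -?ex -?ey //; [apply: sub_undupr|apply: sub_undupl].
rewrite (coordE e uus (inL_undup i1 i2) h) (coordE e u1 i1 ex) (coordE e u2 i2 ey).
case: (boolP (e \in us)) => eu; first by rewrite scalerDl scalerA.
move: eu; rewrite mem_undup mem_cat negb_or => /andP[/negbTE -> /negbTE ->].
by rewrite !scale0r scaler0 addr0.
Qed.

Lemma coord0 e : coord e 0 = 0.
Proof.
by rewrite (@coordE 0 [::] (fun _ => 0) e) ?scale0r // /comb big_nil.
Qed.

Lemma coordD e x y : coord e (x + y) = coord e x + coord e y.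
Proof. by move: (coord_lin e 1 x y); rewrite !scale1r. Qed.

Lemma coordZ e r x : coord e (r *: x) = r *: coord e x.
Proof. by rewrite -[r *: x]addr0 coord_lin coord0 addr0. Qed.

Lemma coord_sum e n (F : 'I_n -> T) :
  coord e (\sum_(i < n) F i) = \sum_(i < n) coord e (F i).
Proof. by apply: (big_morph (coord e)); [exact: coordD|exact: coord0]. Qed.

Lemma coord_hgt n y e : hgt pi n y -> hgt pi n (coord e y).
Proof.
move=> hy; have [u i yr] := rep_spec y; rewrite /coord /coef.
case ee: (e \in (rep y).1); last by rewrite scale0r; apply: hgt0.
by apply: (hPI u i _ ee); rewrite -yr.
Qed.

Lemma coord_ker n y e : pi ^+ n *: y = 0 -> pi ^+ n *: coord e y = 0.
Proof. by move=> ky; rewrite -coordZ ky coord0. Qed.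

Lemma ordEx (e : T) : exists k, pi ^+ k *: e == 0.
Proof. by exists N; rewrite hT. Qed.

Definition ordk e := ex_minn (ordEx e).

Lemma ordk_spec e m : pi ^+ m *: e = 0 <-> (ordk e <= m)%N.
Proof.
rewrite /ordk; case: ex_minnP => k /eqP Hk Hmin; split.
  by move/eqP; apply: Hmin.
by move=> km; rewrite -(subnK km) -exprZ Hk scaler0.
Qed.

Definition Dv n (e v : T) := exists d : R, v = d *: (pi ^+ n *: e).

Lemma Dv0 n e : Dv n e 0.
Proof. by exists 0; rewrite scale0r. Qed.

Lemma Dv_add n e v1 v2 : Dv n e v1 -> Dv n e v2 -> Dv n e (v1 + v2).
Proof. by move=> [d1 ->] [d2 ->]; exists (d1 + d2); rewrite scalerDl. Qed.

Lemma Dv_mono m n e v : (m <= n)%N -> Dv n e v -> Dv m e v.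
Proof.
move=> mn [d ->]; exists (d * pi ^+ (n - m)).
by rewrite -scalerA exprZ subnK.
Qed.

Lemma Dv_big n e v : (ordk e <= n)%N -> Dv n e v -> v = 0.
Proof. by move=> kn [d ->]; rewrite (ordk_spec e n).2 // scaler0. Qed.

Lemma Dv_scal n e c v : Dv n e v -> Dv n e (c *: v).
Proof. by move=> [d ->]; exists (c * d); rewrite -scalerA. Qed.

Lemma L_kill h e c : (h <= ordk e)%N ->
  pi ^+ h *: (c *: e) = 0 <-> Dv (ordk e - h) e (c *: e).
Proof.
move=> hk; split; last first.
  move=> [d ->]; rewrite scalerA mulrC -scalerA exprZ subnKC //.
  by rewrite (ordk_spec e _).2 // scaler0.
case: (eqVneq c 0) => [-> _|cn0]; first by rewrite scale0r; apply: Dv0.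
have [u [w [Uu ->]]] := valP hR cn0.
move=> H.
have H' : u *: (pi ^+ (h + w) *: e) = 0.
  by rewrite -H -exprZ !scalerA; congr (_ *: _); ring.
have /ordk_spec hw := unitZ0 Uu H'.
exists (u * pi ^+ (w - (ordk e - h))).
by rewrite !scalerA -mulrA -exprD subnK // leq_subLR.
Qed.

Lemma he_Dv n e v : E e -> hgt pi n (coord e v) -> Dv n e (coord e v).
Proof.
move=> Ee hv; have [d hd] := he_div hR hHE Ee hv.
by exists d; rewrite /coord hd.
Qed.

Lemma K1 x e : E e -> m_minus pi x -> Dv (ordk e - ordk e %/ 2) e (coord e x).
Proof.
move=> Ee [n [F [HF ->]]].
rewrite (coord_sum e (fun i : 'I_n => F i)).
apply: (big_ind (Dv _ e)); [exact: Dv0|exact: Dv_add|].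
move=> i _; have [hi ki] := HF i (ltn_ord i).
rewrite ImPE in hi; rewrite KerPE in ki.
have hv := coord_hgt e hi; have kv := coord_ker e ki.
have D1 := he_Dv Ee hv.
case: (leqP i (ordk e)) => ik.
  have D2 := (L_kill (coef e (F i)) ik).1 kv.
  case: (leqP (ordk e - ordk e %/ 2) i) => h2; first exact: Dv_mono h2 D1.
  by apply: Dv_mono D2; lia.
by rewrite (Dv_big (ltnW ik) D1); apply: Dv0.
Qed.

Lemma K2 x e : E e -> m_plus pi x -> Dv (ordk e %/ 2) e (coord e x).
Proof.
move=> Ee hx; have [a [b [ha [hb ->]]]] := hx (ordk e %/ 2)%N.
rewrite coordD; apply: Dv_add.
  by apply: (@he_Dv _ e a Ee); apply: coord_hgt; apply/ImPE.
have kb := coord_ker e ((KerPE _ _ _).1 hb).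
have := (L_kill (coef e b) (leq_div _ _)).1 kb.
by move=> D; apply: (Dv_mono _ D); lia.
Qed.

Lemma K3a n e v : Dv n e v -> (ordk e <= n + n)%N -> m_minus pi v.
Proof.
move=> [d ->] kn; apply: (@mmV _ _ _ n).
  by exists (d *: e); rewrite !scalerA mulrC.
by rewrite scalerA mulrC -scalerA exprZ (ordk_spec e _).2 // scaler0.
Qed.

Lemma K3b n e v : Dv n e v -> (ordk e <= (n + n).+1)%N -> m_plus pi v.
Proof.
move=> [d ->] kn m; case: (leqP m n) => mn.
  exists (d *: (pi ^+ n *: e)), 0; rewrite addr0 ImPE KerPE scaler0; split => //.
  by apply: hgtZ; apply: hgt_pi.
exists 0, (d *: (pi ^+ n *: e)); rewrite add0r ImPE KerPE; split; first exact: hgt0.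
rewrite scalerA mulrC -scalerA exprZ (ordk_spec e _).2 ?scaler0 //.
lia.
Qed.

Definition fh (h : nat -> nat) x :=
  \sum_(e <- (rep x).1) pi ^+ h (ordk e) *: coord e x.

Lemma fh_any h x us : uniq us -> {subset (rep x).1 <= us} ->
  fh h x = \sum_(e <- us) pi ^+ h (ordk e) *: coord e x.
Proof.
move=> uus sub; have [u _ _] := rep_spec x.
rewrite /fh (big_super _ u uus sub); apply: eq_bigr => e _.
by case: ifP => // nin; rewrite /coord /coef nin scale0r scaler0.
Qed.

Lemma fh_lin h r x y : fh h (r *: x + y) = r *: fh h x + fh h y.
Proof.
set us := undup ((rep x).1 ++ ((rep y).1 ++ (rep (r *: x + y)).1)).
have uus : uniq us by apply: undup_uniq.
rewrite (@fh_any h x us) // ?(@fh_any h y us) // ?(@fh_any h (r *: x + y) us) //;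
  try by move=> e ee; rewrite mem_undup !mem_cat ee ?orbT.
rewrite scaler_sumr -big_split; apply: eq_bigr => e _.
by rewrite coord_lin scalerDr [X in X + _]scalerA mulrC -scalerA.
Qed.

Lemma fh_rep h x es c : uniq es -> inL E es -> x = comb es c ->
  fh h x = \sum_(e <- es) pi ^+ h (ordk e) *: (c e *: e).
Proof.
move=> ues ies xe; set us := undup ((rep x).1 ++ es).
have uus : uniq us by apply: undup_uniq.
rewrite (@fh_any h x us) //; last by apply: sub_undupl.
rewrite (big_super _ ues uus); last by apply: sub_undupr.
apply: eq_bigr => e _; rewrite (coordE e ues ies xe).
by case: ifP; rewrite ?scale0r ?scaler0.
Qed.

Lemma fh_ker h x : fh h x = 0 <->
  forall e, e \in (rep x).1 -> pi ^+ h (ordk e) *: coord e x = 0.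
Proof.
have [u i xr] := rep_spec x; split; last first.
  by move=> H; rewrite /fh big_seq big1.
move=> H e ee.
have := comb_zero hT hPI (d := fun e => pi ^+ h (ordk e) * coef e x) u i.
move=> Z; rewrite /coord scalerA; apply: Z ee; rewrite -H /fh /comb.
by apply: eq_bigr => e' _; rewrite /coord scalerA.
Qed.

Lemma fh_img h x : (forall e, e \in (rep x).1 -> Dv (h (ordk e)) e (coord e x)) ->
  exists y, x = fh h y.
Proof.
move=> H.
have H' e : exists d, e \in (rep x).1 -> coord e x = d *: (pi ^+ h (ordk e) *: e).
  case ee: (e \in (rep x).1); last by exists 0.
  by have [d hd] := H e ee; exists d.
pose d e := proj1_sig (constructive_indefinite_description _ (H' e)).
have hd e : e \in (rep x).1 -> coord e x = d e *: (pi ^+ h (ordk e) *: e).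
  exact: (proj2_sig (constructive_indefinite_description _ (H' e))).
have [u i xr] := rep_spec x.
exists (comb (rep x).1 d); rewrite (@fh_rep h (comb (rep x).1 d) (rep x).1 d u i erefl) {1}(x_coords x).
rewrite big_seq [RHS]big_seq; apply: eq_bigr => e ee.
by rewrite hd // !scalerA mulrC.
Qed.

Lemma fh_terms h x : fh h x = \sum_(e <- (rep x).1) pi ^+ h (ordk e) *: coord e x /\
  forall e, Dv (h (ordk e)) e (pi ^+ h (ordk e) *: coord e x).
Proof.
split => // e; exists (coef e x).
by rewrite /coord !scalerA mulrC.
Qed.

Lemma repE x e : e \in (rep x).1 -> E e.
Proof. by have [_ i _] := rep_spec x; apply: i. Qed.

Lemma part1 (x : T) : m_plus pi x -> m_minus pi (pi *: x).
Proof.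
move=> hx; rewrite (x_coords x) scaler_sumr; apply: mm_sum => e ee.
have [d hd] := K2 (repE ee) hx.
apply: (@K3a ((ordk e %/ 2).+1) e); last by lia.
by exists d; rewrite hd !scalerA exprS; congr (_ *: _); ring.
Qed.

Lemma iso1 : iso_to_quotient (@m_plus R T pi) (@m_minus R T pi).
Proof.
exists (fh (fun k => (k %/ 2)%N)); split; last split.
- by move=> c x y; apply: fh_lin.
- move=> y; split.
    move=> hy; apply: fh_img => e ee; exact: K2 (repE ee) hy.
  move=> [x ->]; rewrite (fh_terms (fun k => (k %/ 2)%N) x).1; apply: mp_sum => e _.
  apply: (K3b ((fh_terms (fun k => (k %/ 2)%N) x).2 e)) => /=; lia.
- move=> x; split.
    move=> hx; apply/fh_ker => e ee /=.
    have D := K1 (repE ee) hx.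
    by apply: (proj2 (L_kill (coef e x) (leq_div _ _))).
  move=> /fh_ker H; rewrite (x_coords x); apply: mm_sum => e ee.
  have D := (L_kill (coef e x) (leq_div (ordk e) 2)).1 (H e ee).
  apply: (K3a D); lia.
Qed.

Lemma iso2 : iso_to_quotient (@m_minus R T pi) (@m_plus R T pi).
Proof.
exists (fh (fun k => (k - k %/ 2)%N)); split; last split.
- by move=> c x y; apply: fh_lin.
- move=> y; split.
    move=> hy; apply: fh_img => e ee; exact: K1 (repE ee) hy.
  move=> [x ->]; rewrite (fh_terms (fun k => (k - k %/ 2)%N) x).1; apply: mm_sum => e _.
  apply: (K3a ((fh_terms (fun k => (k - k %/ 2)%N) x).2 e)) => /=; lia.
- move=> x; split.
    move=> hx; apply/fh_ker => e ee /=.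
    have D := K2 (repE ee) hx.
    have hk : ((ordk e - ordk e %/ 2) <= ordk e)%N by apply: leq_subr.
    apply: (proj2 (L_kill (coef e x) hk)).
    by rewrite subKn // leq_div.
  move=> /fh_ker H; rewrite (x_coords x); apply: mp_sum => e ee.
  have hk : ((ordk e - ordk e %/ 2) <= ordk e)%N by apply: leq_subr.
  have D := (L_kill (coef e x) hk).1 (H e ee).
  rewrite subKn ?leq_div // in D.
  apply: (K3b D); lia.
Qed.

End Final.

Unset Implicit Arguments.
Set Strict Implicit.

Theorem proposition1p3p3 (R : idomainType) (pi : R) (T : lmodType R) (N : nat)
  (hR : is_DVR_with_uniformizer pi) (hN : (1 <= N)%N)
  (hT : forall x : T, pi ^+ N *: x = 0) :
  (forall x : T, m_plus pi x -> m_minus pi (pi *: x)) /\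
  (forall x : T, m_minus pi x -> m_plus pi x) /\
  iso_to_quotient (@m_plus R T pi) (@m_minus R T pi) /\
  iso_to_quotient (@m_minus R T pi) (@m_plus R T pi).
Proof.
have [E [hPI hHE hsp]] := basis_exists hR hT.
split; first by move=> x; apply: (part1 hR hT hPI hHE hsp).
split; first by move=> x; apply: mm_mp.
split; [exact: (iso1 hR hT hPI hHE hsp)|exact: (iso2 hR hT hPI hHE hsp)].
Qed.
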